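(* Consider the following market. There are $n$ agents $[n]=\{1,\dots,n\}$ and a seller with an unlimited supply of an identical good (at most one copy per agent, zero production cost). Each agent $i$ has a private valuation function $v_i:2^{[n]}\to\mathbb{R}$ assigning a value to every possible winning set $S\subseteq[n]$, satisfying: $v_i(S)\ge 0$; $v_i(S)=0$ if $i\notin S$; $v_i(S)\le v_i(R)$ whenever $S\subseteq R$; and $v_i(S\cup R)\le v_i(S)+v_i(R)$ for all $S,R\subseteq[n]$ with $i\in S\cap R$. Agents report bid functions $b_i:2^{[n]}\to\mathbb{R}_{\ge 0}$ (possibly different from $v_i$). Define the mechanism $\mathcal{M}$ as follows. 1. Independently and uniformly at random put every agent into one of three sets $A,B,C$. 2. For $X\in\{A,B\}$ let $r_X(C)=\max\{c\cdot|T| : c\ge 0,\ T\subseteq C,\ b_i(T\cup X)\ge c \text{ for all } i\in T\}$, and let $r(C)=\max\{r_A(C),r_B(C)\}$. 3. Give the good to every agent of $A$ for free (price $0$). 4. Run the following cost-sharing procedure with $r=r(C)$, $X=B$, $Y=A$: set $S\leftarrow X$; repeat: let $T=\{i\in S : b_i(S\cup Y)<r/|S|\}$ and set $S\leftarrow S\setminus T$, until $T=\emptyset$. If at the end $S\neq\emptyset$, sell the good to every agent of $S$ at price $r/|S|$. Agents of $C$ and agents of $B$ not sold the good receive nothing and pay nothing. Then $\mathcal{M}$ is universally truthful.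
   Context: For a deterministic mechanism that selects a winning set $S$ and charges each $i\in S$ a price $p_i$ (agents outside $S$ pay $0$), the utility of agent $i$ is $v_i(S)-p_i$ if $i\in S$ and $0$ otherwise. A deterministic mechanism is truthful if for every agent $i$ and every fixed reports of the other agents, reporting $b_i=v_i$ maximizes agent $i$'s utility over all possible reports $b_i$. A randomized mechanism is universally truthful if it is a probability distribution over deterministic truthful mechanisms. *)

(* Defs.v *)
From HB Require Import structures.
From mathcomp Require Import all_boot all_order all_algebra.
From mathcomp Require Import boolp classical_sets reals.

Set Implicit Arguments.
Unset Strict Implicit.
Unset Printing Implicit Defensive.

Import Order.TTheory GRing.Theory Num.Theory.
Local Open Scope ring_scope.

Section Market.
Variables (R : realType) (n : nat).

Definition agent := 'I_n.
Definition valfun := {set 'I_n} -> R.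
Definition profile := 'I_n -> valfun.

Definition valuation (i : 'I_n) (v : valfun) : Prop :=
  [/\ (forall S : {set 'I_n}, 0 <= v S),
      (forall S : {set 'I_n}, i \notin S -> v S = 0),
      (forall S T : {set 'I_n}, S \subset T -> v S <= v T) &
      (forall S T : {set 'I_n}, i \in S -> i \in T -> v (S :|: T) <= v S + v T)].

Definition nonneg_profile (b : profile) : Prop := forall (i : 'I_n) (S : {set 'I_n}), 0 <= b i S.

Definition det_mechanism := profile -> {set 'I_n} * ('I_n -> R).

Definition utility (i : 'I_n) (v : valfun) (o : {set 'I_n} * ('I_n -> R)) : R :=
  if i \in o.1 then v o.1 - o.2 i else 0.

Definition upd (b : profile) (i : 'I_n) (bi : valfun) : profile :=
  fun j => if j == i then bi else b j.

Definition truthful (M : det_mechanism) : Prop :=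
  forall (i : 'I_n) (v : valfun) (b : profile),
    valuation i v -> nonneg_profile b ->
    utility i v (M b) <= utility i v (M (upd b i v)).

(* A randomized mechanism with random seed in a finite type Omega, drawn with
   probabilities p; it is universally truthful if it is a distribution over
   deterministic truthful mechanisms, i.e. every mechanism in the support
   is truthful. *)
Definition universally_truthful (Omega : finType) (p : Omega -> R)
    (M : Omega -> det_mechanism) : Prop :=
  (forall w, 0 <= p w) /\ (\sum_w p w = 1) /\
  (forall w, 0 < p w -> truthful (M w)).

(* r_X(C) = max { c |T| : c >= 0, T \subset C, b_i(T u X) >= c for i in T }
   (the maximum exists; we write it as the supremum of that set). *)
Definition rX (b : profile) (X C : {set 'I_n}) : R :=
  sup (fun x : R => exists (c : R) (T : {set 'I_n}),
         [/\ 0 <= c, T \subset C,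
             (forall i, i \in T -> c <= b i (T :|: X)) &
             x = c * #|T|%:R]).

Definition rC (b : profile) (A B C : {set 'I_n}) : R :=
  Num.max (rX b A C) (rX b B C).

Definition cs_step (b : profile) (r : R) (Y S : {set 'I_n}) : {set 'I_n} :=
  S :\: [set i in S | b i (S :|: Y) < r / #|S|%:R].

(* The loop "repeat ... until T = empty": S strictly shrinks until T is empty,
   so after #|X| + 1 rounds the fixpoint has been reached. *)
Definition cost_share (b : profile) (r : R) (X Y : {set 'I_n}) : {set 'I_n} :=
  iter #|X|.+1 (cs_step b r Y) X.

Definition seed := {ffun 'I_n -> 'I_3}.

Definition partA (s : seed) : {set 'I_n} := [set i | val (s i) == 0%N].
Definition partB (s : seed) : {set 'I_n} := [set i | val (s i) == 1%N].
Definition partC (s : seed) : {set 'I_n} := [set i | val (s i) == 2%N].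

Definition mech_det (s : seed) : det_mechanism := fun b =>
  let A := partA s in let B := partB s in let C := partC s in
  let r := rC b A B C in
  let S := cost_share b r B A in
  (A :|: S, fun i => if i \in S then r / #|S|%:R else 0).

Definition seed_prob (s : seed) : R := (3%:R ^+ n)^-1.

End Market.

(* Main.v *)
Require Import Defs.
From HB Require Import structures.
From mathcomp Require Import all_boot all_order all_algebra.
From mathcomp Require Import boolp classical_sets reals.
From mathcomp Require Import zify.

Set Implicit Arguments. Unset Strict Implicit. Unset Printing Implicit Defensive.
Import Order.TTheory GRing.Theory Num.Theory.
Local Open Scope ring_scope.

Section Proofs.
Variables (R : realType) (n : nat).
Implicit Types (b : profile R n) (S X Y C : {set 'I_n}).

Lemma rX_ext b b' X C : (forall j, j \in C -> b' j = b j) -> rX b X C = rX b' X C.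
Proof.
move=> H; rewrite /rX; congr sup; apply/funext => x; apply/propext.
split=> -[c [T [h1 h2 h3 h4]]]; exists c, T; split => // j jT.
- have jC := fintype.subsetP h2 _ jT.
  by rewrite H //; exact: h3.
- have jC := fintype.subsetP h2 _ jT.
  by rewrite -H //; exact: h3.
Qed.

Lemma cs_step_ext b b' r Y S : (forall j, j \in S -> b' j = b j) ->
  cs_step b' r Y S = cs_step b r Y S.
Proof.
move=> H; apply/finset.setP => j; rewrite /cs_step !inE.
by case jS: (j \in S) => //=; rewrite H.
Qed.

Lemma cs_step_mem b r Y S j :
  (j \in cs_step b r Y S) = (j \in S) && ~~ (b j (S :|: Y) < r / #|S|%:R).
Proof. by rewrite /cs_step !inE andbC; case: (j \in S). Qed.

Lemma cs_step_sub b r Y S : cs_step b r Y S \subset S.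
Proof. by apply/fintype.subsetP => j; rewrite !inE => /andP[]. Qed.

Lemma iter_sub b r Y X k : iter k (cs_step b r Y) X \subset X.
Proof.
elim: k => [|k IH] /=; first exact: subxx.
exact: fintype.subset_trans (cs_step_sub _ _ _ _) IH.
Qed.

Lemma iter_mono b r Y X k m : (k <= m)%N ->
  iter m (cs_step b r Y) X \subset iter k (cs_step b r Y) X.
Proof.
move=> /subnKC <-; elim: (m - k)%N => [|d IH]; first by rewrite addn0 subxx.
rewrite addnS /=; exact: fintype.subset_trans (cs_step_sub _ _ _ _) IH.
Qed.

Lemma iter_fix (f : {set 'I_n} -> {set 'I_n}) X :
  (forall S, f S \subset S) -> f (iter #|X|.+1 f X) = iter #|X|.+1 f X.
Proof.
move=> fS.
have H k : f (iter k f X) = iter k f X \/ (#|iter k f X| + k <= #|X|)%N.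
  elim: k => [|k IH] /=; first by right; rewrite addn0.
  case: IH => [E|le]; first by left; rewrite !E.
  case: (eqVneq (f (iter k f X)) (iter k f X)) => [E|ne]; first by left; rewrite !E.
  right; have: (#|f (iter k f X)| < #|iter k f X|)%N.
    by apply: proper_card; rewrite finset.properEneq ne fS.
  by move=> lt; rewrite addnS; apply: leq_trans le; rewrite ltn_add2r.
by case: (H #|X|.+1) => //; lia.
Qed.


Lemma hiter b b' r Y X i k : i \notin X -> (forall j, j != i -> b' j = b j) ->
  iter k (cs_step b' r Y) X = iter k (cs_step b r Y) X.
Proof.
move=> iX H; elim: k => [|k IH] //=; rewrite IH; apply: cs_step_ext => j jM.
apply: H; apply: contraNneq iX => <-; exact: (fintype.subsetP (iter_sub _ _ _ _ _) _ jM).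
Qed.

Lemma truthful_det (s : seed n) : truthful (@mech_det R n s).
Proof.
move=> i v b vv bnn.
set b' := upd b i v.
have Hb' j : j != i -> b' j = b j by rewrite /b' /upd => /negbTE ->.
have Hb'i : b' i = v by rewrite /b' /upd eqxx.
rewrite /mech_det.
set A := partA s; set B := partB s; set C := partC s.
case: vv => v0 vout vmon vsub.
have inA : (i \in A) = (nat_of_ord (s i) == 0%N) by rewrite inE.
have inB : (i \in B) = (nat_of_ord (s i) == 1%N) by rewrite inE.
have inC : (i \in C) = (nat_of_ord (s i) == 2%N) by rewrite inE.
have hr : i \notin C -> rC b A B C = rC b' A B C.
  move=> iC; have HC j : j \in C -> b' j = b j.
    by move=> jC; apply: Hb'; apply: contraNneq iC => <-.
  by rewrite /rC !(rX_ext _ HC).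
move: (ltn_ord (s i)) inA inB inC; case: (nat_of_ord (s i)) => [|[|[|m]]] // _ iA iB iC.
-
  rewrite -hr ?iC // /cost_share (@hiter b b' _ A B i _ (negbT iB) Hb'); exact: le_refl.
-
  rewrite -hr ?iC //; set r := rC b A B C; rewrite /cost_share.
  set N := #|B|.+1.
  set S := iter N (cs_step b r A) B; set S' := iter N (cs_step b' r A) B.
  have hfix : cs_step b' r A S' = S' := iter_fix _ (@cs_step_sub b' r A).
  have hT : 0 <= utility i v (A :|: S', fun i0 => if i0 \in S' then r / #|S'|%:R else 0).
    rewrite /utility /= finset.in_setU iA /=.
    case iS': (i \in S') => //.
    have := iS'; rewrite -{1}hfix cs_step_mem => /andP[_].
    rewrite Hb'i -leNgt => h.
    by rewrite subr_ge0 finset.setUC.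
  rewrite {1}/utility /= finset.in_setU iA /=.
  case iS: (i \in S) => //.
  case: (ltP (v (A :|: S)) (r / #|S|%:R)) => hv.
    apply: (le_trans _ hT); rewrite subr_le0; exact: ltW.
  suff E : S = S'.
    move: iS; rewrite E /utility /= finset.in_setU iA /= => ->; exact: le_refl.
  have key k : (k <= N)%N -> iter k (cs_step b r A) B = iter k (cs_step b' r A) B.
    elim: k => [//|k IH] lt; rewrite /= -IH ?(ltnW lt) //.
    set M := iter k (cs_step b r A) B.
    have SM1 : S \subset cs_step b r A M := iter_mono _ _ _ _ lt.
    have hL : i \in cs_step b r A M := fintype.subsetP SM1 _ iS.
    have SM : S \subset M := fintype.subset_trans SM1 (cs_step_sub _ _ _ _).
    have iM : i \in M := fintype.subsetP SM _ iS.
    apply/finset.setP => j; rewrite !cs_step_mem.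
    case: (eqVneq j i) => [->|ne]; last by rewrite Hb'.
    move: hL; rewrite cs_step_mem => ->; rewrite iM Hb'i /= -leNgt.
    have vle : v (S :|: A) <= v (M :|: A) by apply: vmon; rewrite finset.setSU.
    apply: esym; case: (lerP r 0) => r0.
      apply: (le_trans _ (v0 _)); apply: mulr_le0_ge0 => //; rewrite invr_ge0; exact: ler0n.
    apply: (le_trans _ vle); rewrite finset.setUC; apply: (le_trans _ hv).
    have S0 : (0 < #|S|)%N by apply/card_gt0P; exists i.
    have SMc : (#|S| <= #|M|)%N := subset_leq_card SM.
    rewrite ler_pM2l // lef_pV2 ?posrE ?ltr0n ?ler_nat //; exact: leq_trans SMc.
  exact: key.
-
  have nS (bb : profile R n) (rr : R) : (i \in cost_share bb rr B A) = false.
    apply/negbTE; apply: contraFN iB => h.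
    by move: h; have := iter_sub bb rr A B #|B|.+1 => /fintype.subsetP; apply.
  by rewrite /utility /= !finset.in_setU iA !nS.
Qed.

Lemma lemma1' : universally_truthful (@seed_prob R n) (@mech_det R n).
Proof.
split; first by move=> w; rewrite /seed_prob invr_ge0 exprn_ge0 // ler0n.
split; last by move=> w _; exact: truthful_det.
rewrite /seed_prob sumr_const card_ffun !card_ord -[_ *+ _]mulr_natr natrX mulVf //.
by rewrite expf_neq0 // pnatr_eq0.
Qed.

End Proofs.

Theorem lemma1 (R : realType) (n : nat) :
  universally_truthful (@seed_prob R n) (@mech_det R n).
Proof. exact: lemma1'. Qed.
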